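(* Let $\Omega\subset\mathbb{R}$ be a bounded interval, let $g:\Omega\times\mathbb{R}^+\to\mathbb{R}$ be given, and for $\varepsilon>0$ let $(v,u)=(v_\varepsilon,u_\varepsilon)$ be a pair of smooth functions solving $$v_t-u_x=0,\qquad u_t-\tfrac{1}{\varepsilon^2}v_x=g(x,t)\qquad\text{on }\Omega\times\mathbb{R}^+,$$ with boundary condition $v(x,t)=0$ for all $(x,t)\in\partial\Omega\times\mathbb{R}^+$. Suppose $(v,u)$ admits a two-scale expansion $$v=v^{(0)}+\varepsilon v^{(1)}+\varepsilon^2v^{(2)}+O(\varepsilon^3),\qquad u=u^{(0)}+\varepsilon u^{(1)}+\varepsilon^2u^{(2)}+O(\varepsilon^3),$$ with smooth coefficient functions $v^{(k)},u^{(k)}$ independent of $\varepsilon$, in the sense that $\|v-v^{(0)}-\varepsilon v^{(1)}-\varepsilon^2v^{(2)}\|_{C^1}=O(\varepsilon^3)$ and $\|u-u^{(0)}-\varepsilon u^{(1)}-\varepsilon^2u^{(2)}\|_{C^1}=O(\varepsilon^3)$. Then necessarily $$v(x,t)=\varepsilon^2v^{(2)}(x,t)+O(\varepsilon^3),\qquad u(x,t)=u^{(0)}(t)+\varepsilon u^{(1)}(t)+\varepsilon^2u^{(2)}(x,t)+O(\varepsilon^3),$$ i.e. $v^{(0)}=v^{(1)}=0$ and $u^{(0)},u^{(1)}$ depend only on $t$.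
   Context: $\|\varphi\|_{C^1}:=\|\varphi\|_\infty+\|\nabla_{x,t}\varphi\|_\infty$ on $\Omega\times\mathbb{R}^+$; $O(\varepsilon^3)$ denotes a quantity bounded by a constant times $\varepsilon^3$ as $\varepsilon\to0$. *)

(* Defs.v *)
From Stdlib Require Import Reals List.
From Coquelicot Require Import Coquelicot.
Open Scope R_scope.

Definition PDx (f : R -> R -> R) : R -> R -> R :=
  fun x t => Derive (fun y => f y t) x.
Definition PDt (f : R -> R -> R) : R -> R -> R :=
  fun x t => Derive (fun s => f x s) t.

Fixpoint Dword (w : list bool) (f : R -> R -> R) : R -> R -> R :=
  match w with
  | nil => f
  | b :: w' => (if b then PDx else PDt) (Dword w' f)
  end.

Definition smooth2 (f : R -> R -> R) : Prop :=
  forall (w : list bool) (x t : R),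
    ex_derive (fun y => Dword w f y t) x /\
    ex_derive (fun s => Dword w f x s) t /\
    continuous (fun p : R * R => Dword w f (fst p) (snd p)) (x, t).

Definition in_dom (a b x t : R) : Prop := a < x < b /\ 0 < t.

(* ||phi||_{C^1} on Omega x R^+ is at most K:
   ||phi||_inf + ||grad phi||_inf <= K, written with explicit bounds
   A >= sup |phi| and B >= sup |grad phi|. *)
Definition C1norm_le (a b : R) (phi : R -> R -> R) (K : R) : Prop :=
  exists A B : R,
    (forall x t, in_dom a b x t -> Rabs (phi x t) <= A) /\
    (forall x t, in_dom a b x t ->
        sqrt (PDx phi x t ^ 2 + PDt phi x t ^ 2) <= B) /\
    A + B <= K.

Definition C1_O_eps3 (a b : R) (phi : R -> R -> R -> R) : Prop :=
  exists C eps0 : R, 0 < eps0 /\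
    forall eps, 0 < eps < eps0 -> C1norm_le a b (phi eps) (C * eps ^ 3).

(* Main.v *)
Require Import Defs.
From Stdlib Require Import Reals List Lra.
From Coquelicot Require Import Coquelicot.
Open Scope R_scope.

Lemma L0 (A M e0 : R) : 0 < e0 -> (forall eps, 0 < eps < e0 -> Rabs A <= M * eps) -> A = 0.
Proof.
  intros He H. destruct (Req_dec A 0) as [|HA]; auto. exfalso.
  assert (Hp : 0 < Rabs A) by (apply Rabs_pos_lt; auto).
  assert (HM : 0 < Rabs M + 1) by (pose proof (Rabs_pos M); lra).
  set (eps := Rmin (e0/2) (Rabs A / (2*(Rabs M + 1)))).
  assert (H1 : eps <= e0/2) by apply Rmin_l.
  assert (H2 : eps <= Rabs A / (2*(Rabs M + 1))) by apply Rmin_r.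
  assert (H3 : 0 < eps).
  { unfold eps; apply Rmin_glb_lt; [lra|]. apply Rdiv_lt_0_compat; lra. }
  assert (H4 : (Rabs M + 1) * eps <= Rabs A / 2).
  { apply Rmult_le_reg_r with (/ (Rabs M + 1)). apply Rinv_0_lt_compat; lra.
    replace ((Rabs M + 1) * eps * / (Rabs M + 1)) with eps by (field; lra).
    replace (Rabs A / 2 * / (Rabs M + 1)) with (Rabs A / (2*(Rabs M + 1))) by (field; lra). lra. }
  assert (H5 := H eps ltac:(lra)).
  assert (H6 : M * eps <= Rabs M * eps) by (apply Rmult_le_compat_r; [lra| apply Rle_abs]).
  nra.
Qed.

Lemma L2 (A B K e0 : R) : 0 < e0 ->
  (forall eps, 0 < eps < e0 -> Rabs (A + eps * B) <= K * eps ^ 2) -> A = 0 /\ B = 0.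
Proof.
  intros He H.
  assert (HA : A = 0).
  { apply (L0 A (Rabs K + Rabs B) (Rmin e0 1)).
    apply Rmin_glb_lt; lra.
    intros eps [h1 h2]. assert (eps < e0) by (eapply Rlt_le_trans; [exact h2| apply Rmin_l]).
    assert (eps < 1) by (eapply Rlt_le_trans; [exact h2| apply Rmin_r]).
    specialize (H eps ltac:(lra)).
    replace A with ((A + eps * B) + (- (eps * B))) by ring.
    eapply Rle_trans. apply Rabs_triang. rewrite Rabs_Ropp, Rabs_mult, (Rabs_right eps) by lra.
    assert (K * eps^2 <= Rabs K * eps) .
    { assert (K <= Rabs K) by apply Rle_abs. assert (0 <= Rabs K) by apply Rabs_pos. assert (0 < eps^2) by (apply pow_lt; lra). assert (K*eps^2 <= Rabs K * eps^2) by (apply Rmult_le_compat_r; lra). assert (eps^2 <= eps) by (simpl; nra). nra. }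
    nra. }
  split; auto. subst A.
  apply (L0 B K e0 He). intros eps Heps. specialize (H eps Heps).
  rewrite Rplus_0_l, Rabs_mult, (Rabs_right eps) in H by lra.
  apply Rmult_le_reg_l with eps. lra. nra.
Qed.

Lemma exc (f : R -> R) x : ex_derive f x -> continuous f x.
Proof. intros H; apply (ex_derive_continuous f x H). Qed.

Lemma closure_le (f : R -> R) (a b M : R) : a < b -> continuous f a ->
  (forall x, a < x < b -> Rabs (f x) <= M) -> Rabs (f a) <= M.
Proof.
  intros Hab Hc H. destruct (Rle_lt_dec (Rabs (f a)) M) as [|Hlt]; auto. exfalso.
  assert (Hp : 0 < Rabs (f a) - M) by lra.
  destruct (proj1 (filterlim_locally f (f a)) Hc (mkposreal _ Hp)) as [d Hd].
  set (x := a + Rmin (d/2) ((b-a)/2)).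
  assert (0 < Rmin (d/2) ((b-a)/2)) by (apply Rmin_glb_lt; pose proof (cond_pos d); lra).
  assert (Rmin (d/2) ((b-a)/2) <= d/2) by apply Rmin_l.
  assert (Rmin (d/2) ((b-a)/2) <= (b-a)/2) by apply Rmin_r.
  assert (Hx : Rabs (f x - f a) < Rabs (f a) - M).
  { apply (Hd x). change (Rabs (x - a) < d). unfold x.
    rewrite Rabs_right by lra. pose proof (cond_pos d). lra. }
  assert (Hx2 := H x ltac:(unfold x; lra)).
  pose proof (Rabs_triang_inv (f a) (f x)).
  rewrite <- Rabs_Ropp in Hx. replace (- (f x - f a)) with (f a - f x) in Hx by ring. lra.
Qed.

Lemma const_on (f : R -> R) (a b : R) :
  (forall y, a < y < b -> ex_derive f y /\ Derive f y = 0) ->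
  forall x y, a < x < b -> a < y < b -> f x = f y.
Proof.
  intros H x y Hx Hy.
  assert (K : forall p q, a < p < b -> a < q < b -> p < q -> f p = f q).
  { intros p q Hp Hq Hpq. apply eq_is_derive; auto. intros s Hs.
    destruct (H s ltac:(lra)) as [e D]. change (is_derive f s 0). rewrite <- D. apply Derive_correct; auto. }
  destruct (Rtotal_order x y) as [h|[h|h]]; [auto|subst; auto|symmetry; auto].
Qed.

Lemma C1pt a b phi K x t : C1norm_le a b phi K -> in_dom a b x t ->
  Rabs (phi x t) <= K /\ Rabs (PDx phi x t) <= K /\ Rabs (PDt phi x t) <= K.
Proof.
  intros [A [B [HA [HB HK]]]] Hd.
  specialize (HA x t Hd). specialize (HB x t Hd).
  assert (0 <= Rabs (phi x t)) by apply Rabs_pos.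
  assert (0 <= sqrt (PDx phi x t ^ 2 + PDt phi x t ^ 2)) by apply sqrt_pos.
  assert (Rabs (PDx phi x t) <= sqrt (PDx phi x t ^ 2 + PDt phi x t ^ 2)).
  { rewrite <- sqrt_Rsqr_abs. apply sqrt_le_1_alt. unfold Rsqr. nra. }
  assert (Rabs (PDt phi x t) <= sqrt (PDx phi x t ^ 2 + PDt phi x t ^ 2)).
  { rewrite <- sqrt_Rsqr_abs. apply sqrt_le_1_alt. unfold Rsqr. nra. }
  repeat split; lra.
Qed.

Lemma Dcomb (f f0 f1 f2 : R -> R) e x : ex_derive f x -> ex_derive f0 x ->
  ex_derive f1 x -> ex_derive f2 x ->
  Derive (fun y => f y - f0 y - e * f1 y - e ^ 2 * f2 y) x =
  Derive f x - Derive f0 x - e * Derive f1 x - e ^ 2 * Derive f2 x.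
Proof.
  intros. apply is_derive_unique. auto_derive; auto. change (Derive (fun x0 : R => f x0) x) with (Derive f x). change (Derive (fun x0 : R => f0 x0) x) with (Derive f0 x). change (Derive (fun x0 : R => f1 x0) x) with (Derive f1 x). change (Derive (fun x0 : R => f2 x0) x) with (Derive f2 x). simpl. ring.
Qed.
Lemma tri6 a1 a2 a3 a4 a5 a6 : Rabs (a1+a2+a3+a4+a5+a6) <=
  Rabs a1 + Rabs a2 + Rabs a3 + Rabs a4 + Rabs a5 + Rabs a6.
Proof.
  pose proof (Rabs_triang (a1+a2+a3+a4+a5) a6).
  pose proof (Rabs_triang (a1+a2+a3+a4) a5).
  pose proof (Rabs_triang (a1+a2+a3) a4).
  pose proof (Rabs_triang (a1+a2) a3).
  pose proof (Rabs_triang a1 a2). lra.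
Qed.

Lemma small_e (C e : R) : 0 < e < 1 -> C * e^3 <= Rabs C * e^2.
Proof.
  intros He. assert (C <= Rabs C) by apply Rle_abs. assert (0 <= Rabs C) by apply Rabs_pos.
  assert (0 < e^2) by (apply pow_lt; lra).
  assert (e^3 = e * e^2) by ring.
  assert (C * e^3 <= Rabs C * e^3) by (apply Rmult_le_compat_r; [apply pow_le; lra| lra]).
  assert (Rabs C * e^2 * e <= Rabs C * e^2 * 1) by (apply Rmult_le_compat_l; [apply Rmult_le_pos; lra| lra]).
  nra.
Qed.

Lemma algv (P0 P1 T0 T1 T2 G D2 Vx Ut e Cv Cu: R) : 0<e<1 ->
 Rabs (Vx - P0 - e*P1 - e^2*D2) <= Cv*e^3 ->
 Rabs (Ut - T0 - e*T1 - e^2*T2) <= Cu*e^3 ->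
 Ut - /e^2 * Vx = G ->
 Rabs (P0 + e*P1) <= (Rabs Cv + Rabs Cu + Rabs T0 + Rabs T1 + Rabs T2 + Rabs G + Rabs D2) * e^2.
Proof.
  intros He HX HY HE.
  assert (He2 : 0 < e^2) by (apply pow_lt; lra).
  assert (Hv : Vx = e^2 * (Ut - G)) by (rewrite <- HE; field; lra).
  set (X := Vx - P0 - e*P1 - e^2*D2) in *. set (Y := Ut - T0 - e*T1 - e^2*T2) in *.
  assert (Heq : P0 + e*P1 = e^2 * (Y + T0 + e*T1 + e^2*T2 + - G + - D2) + - X)
    by (unfold X, Y; rewrite Hv; ring).
  rewrite Heq.
  pose proof (tri6 Y T0 (e*T1) (e^2*T2) (-G) (-D2)) as Ht.
  rewrite !Rabs_Ropp, !Rabs_mult, (Rabs_right e), (Rabs_right (e^2)) in Ht by lra.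
  pose proof (Rabs_triang (e ^ 2 * (Y + T0 + e * T1 + e ^ 2 * T2 + - G + - D2)) (-X)) as Ht2.
  rewrite Rabs_Ropp, Rabs_mult, (Rabs_right (e^2)) in Ht2 by lra.
  pose proof (small_e Cv e He). pose proof (small_e Cu e He).
  assert (Rabs Y <= Rabs Cu) by (assert (e^2 <= 1) by (simpl; nra); pose proof (Rabs_pos Cu); nra).
  assert (e * Rabs T1 <= Rabs T1) by (pose proof (Rabs_pos T1); nra).
  assert (e^2 * Rabs T2 <= Rabs T2) by (assert (e^2 <= 1) by (simpl; nra); pose proof (Rabs_pos T2); nra).
  assert (Hz : Rabs (Y + T0 + e * T1 + e ^ 2 * T2 + - G + - D2) <=
     Rabs Cu + Rabs T0 + Rabs T1 + Rabs T2 + Rabs G + Rabs D2) by lra.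
  assert (e^2 * Rabs (Y + T0 + e * T1 + e ^ 2 * T2 + - G + - D2) <=
     e^2 * (Rabs Cu + Rabs T0 + Rabs T1 + Rabs T2 + Rabs G + Rabs D2))
    by (apply Rmult_le_compat_l; lra).
  lra.
Qed.

Lemma algu (Q0 Q1 Ux Vt V2 U2 e Cv Cu : R) : 0<e<1 ->
  Rabs (Ux - Q0 - e*Q1 - e^2*U2) <= Cu*e^3 ->
  Rabs (Vt - 0 - e*0 - e^2*V2) <= Cv*e^3 -> Vt - Ux = 0 ->
  Rabs (Q0 + e*Q1) <= (Rabs Cv + Rabs Cu + Rabs V2 + Rabs U2) * e^2.
Proof.
  intros He HX HY HE.
  assert (He2 : 0 < e^2) by (apply pow_lt; lra).
  set (X := Ux - Q0 - e*Q1 - e^2*U2) in *. set (Y := Vt - 0 - e*0 - e^2*V2) in *.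
  assert (Heq : Q0 + e*Q1 = Y + e^2*V2 + - (e^2*U2) + - X + 0 + 0)
    by (unfold X, Y; replace Vt with Ux by lra; ring).
  rewrite Heq. pose proof (tri6 Y (e^2*V2) (- (e^2*U2)) (-X) 0 0) as Ht.
  rewrite !Rabs_Ropp, !Rabs_mult, (Rabs_right (e^2)), Rabs_R0 in Ht by lra.
  pose proof (small_e Cv e He). pose proof (small_e Cu e He). nra.
Qed.

Lemma xb a b f f0 f1 f2 eps C x t : smooth2 f -> smooth2 f0 -> smooth2 f1 -> smooth2 f2 ->
  C1norm_le a b (fun x t => f x t - f0 x t - eps*f1 x t - eps^2 * f2 x t) (C*eps^3) ->
  in_dom a b x t ->
  Rabs (PDx f x t - PDx f0 x t - eps*PDx f1 x t - eps^2*PDx f2 x t) <= C*eps^3 /\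
  Rabs (PDt f x t - PDt f0 x t - eps*PDt f1 x t - eps^2*PDt f2 x t) <= C*eps^3 /\
  Rabs (f x t - f0 x t - eps*f1 x t - eps^2*f2 x t) <= C*eps^3.
Proof.
  intros S S0 S1 S2 HC Hd.
  destruct (C1pt _ _ _ _ x t HC Hd) as [H0 [H1 H2]].
  unfold PDx, PDt in *.
  rewrite (Dcomb (fun y => f y t) (fun y => f0 y t) (fun y => f1 y t) (fun y => f2 y t) eps x) in H1
    by first [exact (proj1 (S nil x t)) | exact (proj1 (S0 nil x t)) | exact (proj1 (S1 nil x t)) | exact (proj1 (S2 nil x t))].
  rewrite (Dcomb (fun s => f x s) (fun s => f0 x s) (fun s => f1 x s) (fun s => f2 x s) eps t) in H2
    by first [exact (proj1 (proj2 (S nil x t))) | exact (proj1 (proj2 (S0 nil x t))) | exact (proj1 (proj2 (S1 nil x t))) | exact (proj1 (proj2 (S2 nil x t)))].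
  auto.
Qed.

Theorem lemma1
  (a b : R) (Hab : a < b)
  (g : R -> R -> R)
  (v u : R -> R -> R -> R)   (* v eps x t, u eps x t *)
  (v0 v1 v2 u0 u1 u2 : R -> R -> R)
  (Hsm : forall eps, 0 < eps -> smooth2 (v eps) /\ smooth2 (u eps))
  (Hsmc : smooth2 v0 /\ smooth2 v1 /\ smooth2 v2 /\
          smooth2 u0 /\ smooth2 u1 /\ smooth2 u2)
  (Heq1 : forall eps x t, 0 < eps -> in_dom a b x t ->
      PDt (v eps) x t - PDx (u eps) x t = 0)
  (Heq2 : forall eps x t, 0 < eps -> in_dom a b x t ->
      PDt (u eps) x t - / eps ^ 2 * PDx (v eps) x t = g x t)
  (Hbc : forall eps t, 0 < eps -> 0 < t -> v eps a t = 0 /\ v eps b t = 0)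
  (Hexp_v : C1_O_eps3 a b
      (fun eps x t => v eps x t - v0 x t - eps * v1 x t - eps ^ 2 * v2 x t))
  (Hexp_u : C1_O_eps3 a b
      (fun eps x t => u eps x t - u0 x t - eps * u1 x t - eps ^ 2 * u2 x t)) :
  (forall x t, in_dom a b x t -> v0 x t = 0 /\ v1 x t = 0) /\
  exists U0 U1 : R -> R,
    forall x t, in_dom a b x t -> u0 x t = U0 t /\ u1 x t = U1 t.
Proof.
  destruct Hsmc as [S0 [S1 [S2 [T0 [T1 T2]]]]].
  destruct Hexp_v as [Cv [ev [Hev Hv]]]. destruct Hexp_u as [Cu [eu [Heu Hu]]].
  set (e0 := Rmin 1 (Rmin ev eu)).
  assert (He0 : 0 < e0) by (unfold e0; repeat apply Rmin_glb_lt; lra).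
  assert (He1 : e0 <= 1) by apply Rmin_l.
  assert (Hev' : e0 <= ev) by (eapply Rle_trans; [apply Rmin_r| apply Rmin_l]).
  assert (Heu' : e0 <= eu) by (eapply Rle_trans; [apply Rmin_r| apply Rmin_r]).
  assert (SA : forall x t, in_dom a b x t -> PDx v0 x t = 0 /\ PDx v1 x t = 0).
  { intros x t Hd.
    apply (L2 _ _ (Rabs Cv + Rabs Cu + Rabs (PDt u0 x t) + Rabs (PDt u1 x t) + Rabs (PDt u2 x t)
                   + Rabs (g x t) + Rabs (PDx v2 x t)) e0 He0).
    intros eps Heps.
    destruct (Hsm eps ltac:(lra)) as [Sv Su].
    destruct (xb a b _ _ _ _ eps Cv x t Sv S0 S1 S2 (Hv eps ltac:(lra)) Hd) as [Xv _].
    destruct (xb a b _ _ _ _ eps Cu x t Su T0 T1 T2 (Hu eps ltac:(lra)) Hd) as [_ [Yu _]].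
    exact (algv _ _ _ _ _ _ _ _ _ eps Cv Cu ltac:(lra) Xv Yu (Heq2 eps x t ltac:(lra) Hd)). }
  assert (SB : forall x t, in_dom a b x t -> v0 x t = 0 /\ v1 x t = 0).
  { intros x t [Hx Ht].
    assert (Ha : v0 a t = 0 /\ v1 a t = 0).
    { apply (L2 _ _ (Rabs Cv + Rabs (v2 a t)) e0 He0).
      intros eps Heps.
      destruct (Hsm eps ltac:(lra)) as [Sv Su].
      assert (Hcl : Rabs (v eps a t - v0 a t - eps * v1 a t - eps^2 * v2 a t) <= Cv * eps^3).
      { apply (closure_le (fun y => v eps y t - v0 y t - eps * v1 y t - eps^2 * v2 y t) a b); auto.
        apply exc.
        pose proof (proj1 (Sv nil a t)). pose proof (proj1 (S0 nil a t)).
        pose proof (proj1 (S1 nil a t)). pose proof (proj1 (S2 nil a t)).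
        simpl in *. auto_derive; auto.
        intros y Hy.
        destruct (xb a b _ _ _ _ eps Cv y t Sv S0 S1 S2 (Hv eps ltac:(lra)) (conj Hy Ht)) as [_ [_ Z]].
        exact Z. }
      rewrite (proj1 (Hbc eps t ltac:(lra) Ht)) in Hcl.
      replace (v0 a t + eps * v1 a t) with (- (0 - v0 a t - eps * v1 a t - eps^2 * v2 a t) + - (eps^2 * v2 a t)) by ring.
      pose proof (Rabs_triang (- (0 - v0 a t - eps * v1 a t - eps^2 * v2 a t)) (- (eps^2 * v2 a t))).
      rewrite !Rabs_Ropp, Rabs_mult, (Rabs_right (eps^2)) in H by (apply Rle_ge, pow_le; lra).
      pose proof (small_e Cv eps ltac:(lra)). lra. }
    assert (Hconst : forall (f : R -> R -> R), smooth2 f -> (forall y, a < y < b -> PDx f y t = 0) ->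
               f x t = f a t).
    { intros f Sf Hf.
      assert (Hc : forall y, a < y < b -> f y t = f x t).
      { intros y Hy. apply (const_on (fun y => f y t) a b); auto.
        intros z Hz. split. exact (proj1 (Sf nil z t)). exact (Hf z Hz). }
      assert (Rabs (f a t - f x t) <= 0).
      { apply (closure_le (fun y => f y t - f x t) a b); auto.
        apply exc. pose proof (proj1 (Sf nil a t)). simpl in *. auto_derive; auto.
        intros y Hy. rewrite Hc by auto. rewrite Rminus_diag, Rabs_R0. lra. }
      pose proof (Rabs_pos (f a t - f x t)).
      assert (Rabs (f a t - f x t) = 0) by lra.
      apply Rabs_eq_0 in H1. lra. }
    split.
    - rewrite (Hconst v0 S0); [tauto|]. intros y Hy. apply (SA y t (conj Hy Ht)).
    - rewrite (Hconst v1 S1); [tauto|]. intros y Hy. apply (SA y t (conj Hy Ht)). }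
  assert (SC : forall f, (forall x t, in_dom a b x t -> f x t = 0) ->
             forall x t, in_dom a b x t -> PDt f x t = 0).
  { intros f Hf x t [Hx Ht]. unfold PDt.
    rewrite (Derive_ext_loc _ (fun _ => 0)). apply Derive_const.
    exists (mkposreal t Ht). intros s Hs. change (Rabs (s - t) < t) in Hs.
    apply Hf. split; auto. apply Rabs_def2 in Hs. lra. }
  assert (SD : forall x t, in_dom a b x t -> PDx u0 x t = 0 /\ PDx u1 x t = 0).
  { intros x t Hd.
    apply (L2 _ _ (Rabs Cv + Rabs Cu + Rabs (PDt v2 x t) + Rabs (PDx u2 x t)) e0 He0).
    intros eps Heps.
    destruct (Hsm eps ltac:(lra)) as [Sv Su].
    destruct (xb a b _ _ _ _ eps Cv x t Sv S0 S1 S2 (Hv eps ltac:(lra)) Hd) as [_ [Yv _]].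
    destruct (xb a b _ _ _ _ eps Cu x t Su T0 T1 T2 (Hu eps ltac:(lra)) Hd) as [Xu _].
    rewrite (SC v0 (fun x t H => proj1 (SB x t H)) x t Hd),
            (SC v1 (fun x t H => proj2 (SB x t H)) x t Hd) in Yv.
    exact (algu _ _ _ _ _ _ eps Cv Cu ltac:(lra) Xu Yv (Heq1 eps x t ltac:(lra) Hd)). }
  split; [exact SB|].
  set (m := (a+b)/2).
  exists (fun t => u0 m t), (fun t => u1 m t).
  intros x t [Hx Ht].
  assert (Hm : a < m < b) by (unfold m; lra).
  split.
  - apply (const_on (fun y => u0 y t) a b); auto. intros z Hz.
    split. exact (proj1 (T0 nil z t)). exact (proj1 (SD z t (conj Hz Ht))).
  - apply (const_on (fun y => u1 y t) a b); auto. intros z Hz.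
    split. exact (proj1 (T1 nil z t)). exact (proj2 (SD z t (conj Hz Ht))).
Qed.
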